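(* Let $f(z)=e^z$. If $U,V\subset\mathbb{C}$ are nonempty and open, then there exists $n\geq 0$ such that $f^n(U)\cap V\neq\emptyset$.
   Context: $f^n$ denotes the $n$-th iterate of $f$. *)

(* Defs.v *)
From Stdlib Require Import Reals.
Open Scope R_scope.

Definition Cplx : Type := (R * R)%type.

(* Complex exponential: exp(x + i y) = e^x (cos y + i sin y). *)
Definition Cexp (z : Cplx) : Cplx :=
  (exp (fst z) * cos (snd z), exp (fst z) * sin (snd z)).

Definition Cdist (z w : Cplx) : R :=
  sqrt (Rsqr (fst z - fst w) + Rsqr (snd z - snd w)).

Definition C_open (U : Cplx -> Prop) : Prop :=
  forall z, U z -> exists r, 0 < r /\ forall w, Cdist w z < r -> U w.

Definition iterate (f : Cplx -> Cplx) (n : nat) : Cplx -> Cplx := Nat.iter n f.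

(* Main.v *)
Require Import Defs.
From Stdlib Require Import Reals Lra Psatz ZArith Classical.
Open Scope R_scope.


Lemma sin_poly a : 0 <= a -> a <= PI -> a - a^3/6 <= sin a <= a - a^3/6 + a^5/120.
Proof. intros H1 H2. destruct (sin_bound a 0 H1 H2) as [H H'].
  unfold sin_approx, sin_term in H, H'. simpl in H, H'.
  replace (a * (a * (a * 1))) with (a^3) in H, H' by field.
  replace (a * (a * (a * (a * (a * 1))))) with (a^5) in H' by field.
  lra.
Qed.

Lemma cos_ub_poly a : - PI/2 <= a -> a <= PI/2 -> cos a <= 1 - a^2/2 + a^4/24.
Proof. intros H1 H2. destruct (cos_bound a 0 H1 H2) as [_ H].
  unfold cos_approx, cos_term in H. simpl in H.
  replace (a * (a * 1)) with (a^2) in H by field.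
  replace (a * (a * (a * (a * 1)))) with (a^4) in H by field.
  lra.
Qed.

Lemma PI_bnds : 3 < PI <= 4.
Proof. pose proof PI2_3_2; pose proof PI_4; lra. Qed.

Lemma Rtcos h : 0 <= h -> h <= PI/2 -> h * cos h <= sin h.
Proof. intros H1 H2. pose proof PI_bnds.
  destruct (sin_poly h H1 ltac:(lra)) as [Hs _].
  assert (Hc := cos_ub_poly h ltac:(lra) H2).
  assert (h^2 <= 4) by nra.
  assert (h*cos h <= h*(1 - h^2/2 + h^4/24)) by (apply Rmult_le_compat_l; lra).
  assert (h*(1 - h^2/2 + h^4/24) <= h - h^3/6).
  { assert (0 <= h^3) by (apply pow_le; lra).
    replace (h*(1 - h^2/2 + h^4/24)) with (h - h^3/2 + h^3*h^2/24) by field. nra. }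
  lra.
Qed.

Lemma sin_le_id x : 0 <= x -> sin x <= x.
Proof. intros H. destruct (Req_dec x 0) as [->|]. rewrite sin_0; lra.
  left; apply sin_lt_x; lra. Qed.

Lemma Rmono h t : 0 < h -> h <= t -> t <= PI/2 -> h * sin t <= t * sin h.
Proof. intros H1 H2 H3. pose proof PI_bnds.
  replace t with (h + (t - h)) at 1 by ring. rewrite sin_plus.
  assert (Hc : cos (t-h) <= 1) by (apply COS_bound).
  assert (Hs : sin (t-h) <= t - h) by (apply sin_le_id; lra).
  assert (Hsh : 0 <= sin h) by (apply sin_ge_0; lra).
  assert (Hch : 0 <= cos h) by (apply cos_ge_0; lra).
  assert (R := Rtcos h ltac:(lra) ltac:(lra)).
  assert (h * (sin h * cos (t - h)) <= h * sin h) by (apply Rmult_le_compat_l; nra).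
  assert (h * (cos h * sin (t - h)) <= h * cos h * (t - h)).
  { rewrite <- Rmult_assoc. apply Rmult_le_compat_l; nra. }
  nra.
Qed.

Definition k0 : R := 99/100.

Lemma Rtcosk t : 1/4 <= t -> t <= PI/2 -> t * cos t <= k0 * sin t.
Proof. intros H1 H2. pose proof PI_bnds. unfold k0.
  destruct (sin_poly t ltac:(lra) ltac:(lra)) as [Hs _].
  assert (Hc := cos_ub_poly t ltac:(lra) H2).
  assert (t^2 <= 4) by nra. assert (1/16 <= t^2) by nra.
  assert (t*cos t <= t*(1 - t^2/2 + t^4/24)) by (apply Rmult_le_compat_l; lra).
  assert (t*(1 - t^2/2 + t^4/24) <= 99/100 * (t - t^3/6)).
  { replace (t*(1 - t^2/2 + t^4/24) - 99/100 * (t - t^3/6)) with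
        (t * (1/100 - (67/200) * t^2 + t^2*t^2/24)) by field.
    assert (1/100 - (67/200) * t^2 + t^2*t^2/24 <= 0) by nra. nra. }
  lra.
Qed.

Lemma abs_sin_abs y : Rabs (sin y) = Rabs (sin (Rabs y)).
Proof. destruct (Rle_dec 0 y).
  - rewrite (Rabs_pos_eq y); auto.
  - rewrite (Rabs_left y) by lra. rewrite sin_neg, Rabs_Ropp; auto. Qed.

Lemma sin_abs_le y : Rabs (sin y) <= Rabs y.
Proof. rewrite abs_sin_abs. set (s := Rabs y). assert (0 <= s) by apply Rabs_pos.
  pose proof PI_bnds. destruct (Rle_dec s PI).
  - rewrite Rabs_pos_eq by (apply sin_ge_0; lra). apply sin_le_id; auto.
  - pose proof (SIN_bound s). apply Rabs_le. lra. Qed.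

Lemma sin_abs_k0 y : 1/2 <= Rabs y -> Rabs (sin y) <= k0 * Rabs y.
Proof. intros Hy. rewrite abs_sin_abs. set (s := Rabs y) in *. pose proof PI_bnds. unfold k0.
  destruct (Rle_dec s 2).
  - rewrite Rabs_pos_eq by (apply sin_ge_0; lra).
    destruct (sin_poly s ltac:(lra) ltac:(lra)) as [_ Hs].
    assert (s - s^3/6 + s^5/120 <= 99/100*s).
    { replace (s - s^3/6 + s^5/120 - 99/100*s) with (s*(1/100 - s^2/6 + s^2*s^2/120)) by field.
      assert (s^2 <= 4) by nra. assert (1/4 <= s^2) by nra.
      assert (1/100 - s^2/6 + s^2*s^2/120 <= 0) by nra. nra. }
    lra.
  - pose proof (SIN_bound s). apply Rabs_le. lra. Qed.

Lemma nat_gt r : exists n : nat, r < INR n.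
Proof. destruct (INR_archimed 1 r ltac:(lra)) as [n Hn]. exists n. lra. Qed.

Lemma pow2_ge n : INR n + 1 <= 2 ^ n.
Proof. induction n. simpl; lra. rewrite S_INR. simpl. pose proof (pos_INR n). lra. Qed.

Lemma exp_pos' x : 0 < exp x. Proof. apply exp_pos. Qed.

Lemma exp_neg_inv x : exp (- x) = / exp x.
Proof. apply exp_Ropp. Qed.

Definition Dsh (s : R) := exp s - exp (- s).

Lemma Dsh_base s : 0 <= s -> 2*s - s^2 <= Dsh s.
Proof. intros Hs. unfold Dsh. rewrite exp_neg_inv.
  assert (H1 := exp_ineq1_le s). assert (H2 := exp_pos s).
  assert (/ exp s <= / (1 + s)) by (apply Rinv_le_contravar; lra).
  assert (1 + s - / (1+s) >= 2*s - s^2).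
  { assert (/ (1+s) * (1+s) = 1) by (field; lra).
    assert (0 < / (1+s)) by (apply Rinv_0_lt_compat; lra). nra. }
  lra.
Qed.

Lemma Dsh_double s : 0 <= s -> 2 * Dsh s <= Dsh (2*s).
Proof. intros Hs. unfold Dsh.
  replace (2*s) with (s+s) by ring. replace (-(s+s)) with (-s + -s) by ring.
  rewrite !exp_plus. rewrite exp_neg_inv.
  assert (H2 := exp_pos s). assert (exp s >= 1). { pose proof (exp_ineq1_le s). lra. }
  assert (/ exp s * exp s = 1) by (field; lra).
  assert (0 < / exp s) by (apply Rinv_0_lt_compat; lra).
  assert (/ exp s <= 1). { rewrite <- Rinv_1. apply Rinv_le_contravar; lra. }
  assert (exp s + / exp s - 2 >= 0) by nra.
  assert (exp s - / exp s >= 0) by lra.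
  nra.
Qed.

Lemma Dsh_n n : forall s, 0 <= s -> 2*s - s^2 / 2^n <= Dsh s.
Proof. induction n; intros s Hs.
  - replace (s^2/2^0) with (s^2) by (simpl; field). apply Dsh_base; auto.
  - assert (H := IHn (s/2) ltac:(lra)). assert (H2 := Dsh_double (s/2) ltac:(lra)).
    replace (2*(s/2)) with s in H2 by field.
    assert (0 < 2^n) by (apply pow_lt; lra).
    replace (2*s - s^2/2^S n) with (2*(2*(s/2) - (s/2)^2/2^n)) by (simpl; field; lra).
    lra.
Qed.

Lemma Dsh_ge s : 0 <= s -> 2*s <= Dsh s.
Proof. intros Hs. destruct (Rle_dec (2*s) (Dsh s)) as [|Hnot]; auto. exfalso.
  set (e := 2*s - Dsh s). assert (He : 0 < e) by (unfold e; lra).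
  destruct (nat_gt (s^2/e)) as [n Hn].
  assert (H := Dsh_n n s Hs). assert (H2 := pow2_ge n).
  assert (0 < 2^n) by (apply pow_lt; lra).
  assert (s^2 / 2^n < e).
  { apply (Rmult_lt_reg_r (2^n)); auto. field_simplify; [|lra].
    assert (s^2 < e * INR n).
    { apply (Rmult_lt_reg_r (/e)). apply Rinv_0_lt_compat; auto.
      replace (e * INR n * /e) with (INR n) by (field; lra). exact Hn. }
    assert (0 <= s^2) by nra. nra. }
  unfold e in *; lra.
Qed.

Lemma cosh_bound a : 2 + a^2 <= exp a + exp (- a).
Proof.
  assert (E : exp a + exp (-a) - 2 = (exp (a/2) - exp (-(a/2)))^2).
  { replace a with (a/2 + a/2) at 1 by field. replace (-a) with (-(a/2) + -(a/2)) by field.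
    rewrite !exp_plus. rewrite exp_neg_inv. assert (H := exp_pos (a/2)). field; lra. }
  destruct (Rle_dec 0 a).
  - assert (H := Dsh_ge (a/2) ltac:(lra)). unfold Dsh in H. nra.
  - assert (H := Dsh_ge (-(a/2)) ltac:(lra)). unfold Dsh in H.
    replace (- - (a/2)) with (a/2) in H by ring. nra.
Qed.

Lemma ln_le_sub1 r : 0 < r -> ln r <= r - 1.
Proof. intros H. pose proof (exp_ineq1_le (ln r)). rewrite exp_ln in H0; auto. lra. Qed.

Lemma ln_ge_1inv r : 0 < r -> 1 - / r <= ln r.
Proof. intros H. assert (0 < /r) by (apply Rinv_0_lt_compat; auto).
  pose proof (ln_le_sub1 (/r) H0). rewrite ln_Rinv in H1; auto. lra. Qed.

Lemma atan_abs t : Rabs (atan t) <= Rabs t.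
Proof.
  assert (Hpos : forall t, 0 <= t -> 0 <= atan t <= t).
  { intros u Hu. pose proof (atan_bound u) as [B1 B2].
    assert (0 <= atan u).
    { destruct (Req_dec u 0) as [->|]. rewrite atan_0; lra.
      left. rewrite <- atan_0. apply atan_increasing. lra. }
    split; auto.
    assert (Hc : 0 < cos (atan u)) by (apply cos_gt_0; lra).
    assert (Ht := tan_atan u). unfold tan in Ht.
    assert (Hs : sin (atan u) = u * cos (atan u)).
    { transitivity (sin (atan u) / cos (atan u) * cos (atan u)). field; lra. rewrite Ht; reflexivity. }
    assert (R := Rtcos (atan u) H ltac:(lra)). rewrite Hs in R.
    apply (Rmult_le_reg_r (cos (atan u))); auto. }
  destruct (Rle_dec 0 t).
  - destruct (Hpos t r). rewrite !Rabs_pos_eq; lra.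
  - destruct (Hpos (-t) ltac:(lra)). rewrite atan_opp in H.
    rewrite (Rabs_left t) by lra. rewrite Rabs_left1 by lra. rewrite atan_opp in H0. lra.
Qed.


Definition cd2 (z w : Cplx) : R := (fst z - fst w)^2 + (snd z - snd w)^2.
Definition SameStrip (y y' : R) : Prop := 0 < sin y * sin y' /\ Rabs (y - y') < PI /\ 0 < y * y'.
Definition KOK (k y : R) : Prop := k = 1 \/ (k = k0 /\ 1/2 <= Rabs y).

Lemma KOK_pos k y : KOK k y -> 1/4 <= k <= 1.
Proof. unfold KOK, k0; intros [->|[-> _]]; lra. Qed.

Lemma I2_S0 M mn k : 0 < mn -> mn <= M -> M < PI -> (k = 1 \/ (k = k0 /\ 1/2 <= M)) ->
  sin M * sin mn * (M - mn)^2 <= k * (M*mn) * (4 * sin ((M - mn)/2) ^2).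
Proof. intros H1 H2 H3 Hk. pose proof PI_bnds.
  assert (Hkp : 1/4 <= k) by (unfold k0 in Hk; destruct Hk as [->|[-> _]]; lra).
  set (t := M/2). set (h := (M - mn)/2).
  assert (HM : M = 2*t) by (unfold t; field). assert (Hmn : M - mn = 2*h) by (unfold h; field).
  rewrite Hmn. replace (2*h/2) with h by field.
  destruct (Req_dec h 0) as [Hh0|Hh0].
  { rewrite Hh0. rewrite sin_0. ring_simplify. lra. }
  assert (Hh : 0 < h) by (unfold h in *; lra). assert (Hht : h <= t) by (unfold h, t; lra).
  assert (Ht2 : t <= PI/2) by (unfold t; lra). assert (Ht0 : 0 < t) by lra.
  assert (Hst : 0 < sin t) by (apply sin_gt_0; lra).
  assert (Hsh : 0 < sin h) by (apply sin_gt_0; lra).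
  assert (Hct : 0 <= cos t) by (apply cos_ge_0; lra).
  assert (Hkey1 : t * cos t <= k * sin t).
  { destruct Hk as [->|[-> HM2]]. rewrite Rmult_1_l. apply Rtcos; lra. apply Rtcosk; unfold t; lra. }
  assert (Hr1 := Rmono h t Hh Hht Ht2).
  assert (Hkey : sin t * cos t * h^2 <= k * t * sin h ^2).
  { apply (Rmult_le_reg_l t); auto.
    assert (t * (sin t * cos t * h^2) = (t * cos t) * (sin t * h^2)) by ring.
    assert ((t * cos t) * (sin t * h^2) <= (k * sin t) * (sin t * h^2)).
    { apply Rmult_le_compat_r; auto. nra. }
    assert ((k * sin t) * (sin t * h^2) = k * (h * sin t)^2) by ring.
    assert ((h * sin t)^2 <= (t * sin h)^2).
    { apply pow_incr. split; nra. }
    nra. }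
  assert (Hsm : sin mn <= mn) by (apply sin_le_id; lra).
  assert (HsM : sin M = 2 * sin t * cos t) by (rewrite HM; apply sin_2a).
  assert (0 <= sin M) by (rewrite HsM; nra).
  assert (sin M * sin mn * (2*h)^2 <= sin M * mn * (2*h)^2).
  { apply Rmult_le_compat_r. nra. apply Rmult_le_compat_l; auto. }
  assert (sin M * mn * (2*h)^2 = 8 * mn * (sin t * cos t * h^2)) by (rewrite HsM; ring).
  assert (k * (M * mn) * (4 * sin h ^2) = 8 * mn * (k * t * sin h^2)) by (rewrite HM; ring).
  assert (8 * mn * (sin t * cos t * h^2) <= 8 * mn * (k * t * sin h^2)) by (apply Rmult_le_compat_l; lra).
  lra.
Qed.

Lemma I2_big y y' k : PI <= y -> PI <= y' -> Rabs (y - y') < PI -> 1/4 <= k ->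
  sin y * sin y' * (y' - y)^2 <= k * (y*y') * (4 * sin ((y' - y)/2) ^2).
Proof. intros H1 H2 H3 Hk. pose proof PI_bnds.
  set (h := Rabs (y'-y)/2).
  assert (Hsq : sin ((y' - y)/2) ^2 = sin h ^2).
  { unfold h. destruct (Rle_dec 0 (y'-y)). rewrite Rabs_pos_eq; auto.
    rewrite Rabs_left by lra. replace (- (y'-y)/2) with (- ((y'-y)/2)) by field. rewrite sin_neg. ring. }
  assert (Hb : (y' - y)^2 = (2*h)^2).
  { unfold h. replace (2 * (Rabs (y'-y)/2)) with (Rabs (y'-y)) by field. rewrite <- Rsqr_pow2, <- Rsqr_pow2. apply Rsqr_abs. }
  rewrite Hsq, Hb. rewrite Rabs_minus_sym in H3.
  assert (Hh0 : 0 <= h) by (unfold h; pose proof (Rabs_pos (y'-y)); lra).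
  assert (Hh1 : h < PI/2) by (unfold h; lra).
  assert (Hlow : 2*h/PI <= sin h).
  { destruct (Req_dec h 0) as [->|]. rewrite sin_0. lra.
    assert (R := Rmono h (PI/2) ltac:(lra) ltac:(lra) ltac:(lra)). rewrite sin_PI2 in R.
    apply (Rmult_le_reg_l (PI/2)). lra. replace (PI/2 * (2*h/PI)) with h by (field; lra). lra. }
  assert (Hs1 : sin y * sin y' <= 1).
  { pose proof (SIN_bound y). pose proof (SIN_bound y'). nra. }
  assert (Hyy : PI^2 <= y*y') by nra.
  assert (0 <= 2*h/PI) by (apply Rmult_le_pos; [lra| left; apply Rinv_0_lt_compat; lra]).
  assert ((2*h/PI)^2 <= sin h^2) by (apply pow_incr; lra).
  assert (PI^2 * (2*h/PI)^2 = 4 * h^2) by (field; lra).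
  assert (0 <= (2*h)^2) by nra.
  assert (sin y * sin y' * (2*h)^2 <= (2*h)^2) by nra.
  assert (k * (PI^2) * (4 * (2*h/PI)^2) <= k * (y*y') * (4 * sin h^2)).
  { apply Rmult_le_compat. nra. nra. nra. nra. }
  nra.
Qed.

Lemma I2pos y y' k : 0 < y -> SameStrip y y' -> KOK k y ->
  sin y * sin y' * (y' - y)^2 <= k * (y*y') * (4 * sin ((y' - y)/2) ^2).
Proof. intros Hy [HS [Hd Hp]] Hk. pose proof PI_bnds.
  assert (Hy' : 0 < y') by nra.
  assert (Hk4 := KOK_pos k y Hk).
  destruct (Rlt_dec y PI) as [Hlt|Hge].
  - destruct (Rlt_dec y' PI) as [Hlt'|Hge'].
    + destruct (Rle_dec y' y) as [Hle|Hle].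
      * assert (Hk' : k = 1 \/ (k = k0 /\ 1/2 <= y)).
        { destruct Hk as [->|[-> Ha]]; [left; auto| right; rewrite Rabs_pos_eq in Ha; lra]. }
        assert (E := I2_S0 y y' k Hy' Hle Hlt Hk').
        replace ((y' - y)^2) with ((y - y')^2) by ring.
        replace (sin ((y'-y)/2) ^2) with (sin ((y-y')/2)^2).
        2:{ replace ((y'-y)/2) with (- ((y-y')/2)) by field. rewrite sin_neg. ring. }
        replace (y*y') with (y*y') by ring. exact E.
      * assert (Hk' : k = 1 \/ (k = k0 /\ 1/2 <= y')).
        { destruct Hk as [->|[-> Ha]]; [left; auto| right; rewrite Rabs_pos_eq in Ha; lra]. }
        assert (E := I2_S0 y' y k Hy ltac:(lra) Hlt' Hk').
        replace (sin y * sin y') with (sin y' * sin y) by ring.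
        replace (y*y') with (y'*y) by ring. exact E.
    + exfalso. assert (sin y' <= 0) by (apply sin_le_0; apply Rabs_def2 in Hd; lra).
      assert (0 < sin y) by (apply sin_gt_0; lra). nra.
  - destruct (Rlt_dec y' PI) as [Hlt'|Hge'].
    + exfalso. assert (sin y <= 0) by (apply sin_le_0; apply Rabs_def2 in Hd; lra).
      assert (0 < sin y') by (apply sin_gt_0; lra). nra.
    + apply I2_big; lra.
Qed.

Lemma SameStrip_neg y y' : SameStrip y y' -> SameStrip (-y) (-y').
Proof. unfold SameStrip; rewrite !sin_neg. intros [A [B C]]. repeat split; try nra.
  replace (-y - -y') with (-(y-y')) by ring. rewrite Rabs_Ropp; auto. Qed.

Lemma I2 y y' k : SameStrip y y' -> KOK k y ->
  sin y * sin y' * (y' - y)^2 <= k * (y*y') * (4 * sin ((y' - y)/2) ^2).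
Proof. intros HS Hk. destruct (Rlt_dec 0 y).
  - apply I2pos; auto.
  - assert (y <> 0). { intro; subst. destruct HS as [_ [_ C]]. lra. }
    assert (E := I2pos (-y) (-y') k ltac:(lra) (SameStrip_neg _ _ HS)
       ltac:(destruct Hk as [->|[-> Ha]]; [left; auto| right; split; auto; rewrite Rabs_Ropp; auto])).
    rewrite !sin_neg in E. replace (- y' - - y) with (-(y'-y)) in E by ring.
    replace (- (y'-y) / 2) with (- ((y'-y)/2)) in E by field. rewrite sin_neg in E.
    replace (- sin y * - sin y') with (sin y * sin y') in E by ring.
    replace (- y * - y') with (y*y') in E by ring.
    replace ((- (y'-y))^2) with ((y'-y)^2) in E by ring.
    replace ((- sin ((y' - y) / 2)) ^ 2) with (sin ((y' - y) / 2) ^ 2) in E by ring. exact E.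
Qed.

Lemma I1 y y' k : SameStrip y y' -> KOK k y -> sin y * sin y' <= k * (y * y').
Proof. intros [HS [_ Hp]] Hk.
  assert (A : Rabs (sin y) <= k * Rabs y).
  { destruct Hk as [->|[-> Ha]]. rewrite Rmult_1_l; apply sin_abs_le. apply sin_abs_k0; auto. }
  assert (B := sin_abs_le y').
  assert (sin y * sin y' <= Rabs (sin y) * Rabs (sin y')) by (rewrite <- Rabs_mult; apply Rle_abs).
  assert (Rabs (sin y) * Rabs (sin y') <= k * Rabs y * Rabs y').
  { apply Rmult_le_compat; auto; apply Rabs_pos. }
  assert (Rabs y * Rabs y' = y * y') by (rewrite <- Rabs_mult; apply Rabs_pos_eq; lra).
  nra.
Qed.

Lemma Qineq (p z : Cplx) k : SameStrip (snd p) (snd z) -> KOK k (snd p) ->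
  cd2 z p * (snd (Cexp z) * snd (Cexp p)) <= k * cd2 (Cexp z) (Cexp p) * (snd z * snd p).
Proof. destruct p as [x y]; destruct z as [x' y']. unfold cd2, Cexp; cbn [fst snd] in *. intros HS Hk.
  assert (Hk4 := KOK_pos k y Hk).
  set (a := x' - x). set (b := y' - y). set (s := sin (b/2)).
  assert (Hc := cos_2a_sin (b/2)). replace (2*(b/2)) with b in Hc by field. fold s in Hc.
  assert (Hcm : cos b = cos y' * cos y + sin y' * sin y) by (unfold b; apply cos_minus).
  set (X := exp x). set (X' := exp x').
  assert (HX : 0 < X) by apply exp_pos. assert (HX' : 0 < X') by apply exp_pos.
  assert (Ea : X' = X * exp a) by (unfold X, X', a; rewrite <- exp_plus; f_equal; ring).
  assert (Ema : X = X' * exp (-a)) by (unfold X, X', a; rewrite <- exp_plus; f_equal; ring).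
  assert (Hch := cosh_bound a).
  assert (HD : (X' * cos y' - X * cos y)^2 + (X' * sin y' - X * sin y)^2
              = X*X' * (exp a + exp (-a) - 2 + 4 * s^2)).
  { assert (Hsc1 := sin2_cos2 y). assert (Hsc2 := sin2_cos2 y'). unfold Rsqr in *.
    assert (X'*X' = X*X'*exp a) by (rewrite Ea at 1; ring).
    assert (X*X = X*X'*exp (-a)) by (rewrite Ema at 1; ring).
    assert (X' * cos y' * (X * cos y) + X' * sin y' * (X * sin y) = X*X' * cos b) by (rewrite Hcm; ring).
    nra. }
  rewrite HD.
  assert (Hcore : (a^2 + b^2) * (sin y * sin y') <= k * (a^2 + 4*s^2) * (y * y')).
  { assert (E1 := I1 y y' k HS Hk). assert (E2 := I2 y y' k HS Hk). fold b s in E2.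
    assert (0 <= a^2) by nra. nra. }
  assert (HXX : 0 < X * X') by nra.
  assert (k * (a^2 + 4*s^2) <= k * (exp a + exp (-a) - 2 + 4 * s^2)) by (apply Rmult_le_compat_l; lra).
  destruct HS as [_ [_ Hp]].
  try replace ((x' - x)^2 + (y' - y)^2) with (a^2 + b^2) by (unfold a, b; ring).
  replace (X' * sin y' * (X * sin y)) with (X * X' * (sin y * sin y')) by ring.
  replace (k * (X * X' * (exp a + exp (- a) - 2 + 4 * s ^ 2)) * (y' * y))
     with (X * X' * ((k * (exp a + exp (- a) - 2 + 4 * s ^ 2)) * (y * y'))) by ring.
  replace ((a ^ 2 + b ^ 2) * (X * X' * (sin y * sin y'))) with (X * X' * ((a ^ 2 + b ^ 2) * (sin y * sin y'))) by ring.
  apply Rmult_le_compat_l; [lra|]. nra.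
Qed.


Lemma LogStrip (p w : Cplx) : sin (snd p) <> 0 -> 0 < snd w * snd (Cexp p) ->
  exists z, Cexp z = w /\ fst z = ln (sqrt (fst w ^2 + snd w ^2)) /\ SameStrip (snd p) (snd z).
Proof. destruct p as [px py]; destruct w as [w1 w2]. unfold Cexp. cbn [fst snd]. intros Hs Hw.
  pose proof PI_bnds.
  set (k := Zfloor (py / PI)). destruct (Zfloor_bound (py/PI)) as [B1 B2]. fold k in B1, B2.
  set (c := IZR k * PI).
  assert (Hc1 : c <= py). { unfold c. apply (Rmult_le_reg_r (/PI)). apply Rinv_0_lt_compat; lra.
     replace (IZR k * PI * / PI) with (IZR k) by (field; lra). exact B1. }
  assert (Hc2 : py < c + PI). { unfold c. apply (Rmult_lt_reg_r (/PI)). apply Rinv_0_lt_compat; lra.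
     replace ((IZR k * PI + PI) * / PI) with (IZR k + 1) by (field; lra). exact B2. }
  assert (Hsc : sin c = 0) by (apply sin_eq_0_1; exists k; reflexivity).
  assert (Hc1' : c < py). { destruct Hc1 as [|E]; auto. exfalso. apply Hs. rewrite <- E. auto. }
  set (eps := cos c).
  assert (He2 : eps * eps = 1). { pose proof (sin2_cos2 c). rewrite Hsc in H0. unfold Rsqr in H0. unfold eps. lra. }
  assert (Hspy : sin py = eps * sin (py - c)).
  { replace py with (c + (py - c)) at 1 by ring. rewrite sin_plus, Hsc. unfold eps; ring. }
  assert (Hsd : 0 < sin (py - c)) by (apply sin_gt_0; lra).
  assert (Hex := exp_pos px).
  assert (Hwe : 0 < w2 * eps).
  { rewrite Hspy in Hw. assert (H0 : 0 < w2 * eps * (exp px * sin (py - c))).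
    { replace (w2 * eps * (exp px * sin (py - c))) with (w2 * (exp px * (eps * sin (py - c)))) by ring. exact Hw. }
    assert (0 < exp px * sin (py-c)) by (apply Rmult_lt_0_compat; auto).
    destruct (Rle_dec (w2*eps) 0); [|lra]. exfalso. nra. }
  assert (Hw2 : w2 <> 0) by (intro; subst; lra).
  assert (Hr2 : 0 < w1^2 + w2^2) by nra.
  set (r := sqrt (w1^2 + w2^2)).
  assert (Hr : 0 < r) by (apply sqrt_lt_R0; auto).
  assert (Hrr : r * r = w1^2 + w2^2) by (apply sqrt_sqrt; lra).
  set (q := eps * w1 / r).
  assert (Hq2 : q * q = w1^2 / (w1^2 + w2^2)).
  { unfold q. rewrite <- Hrr.
    replace (eps*w1/r * (eps*w1/r)) with ((eps*eps)*w1^2/(r*r)) by (field; lra). rewrite He2. field; lra. }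
  assert (Hq : -1 < q < 1).
  { assert (q * q < 1). { rewrite Hq2. apply (Rmult_lt_reg_r (w1^2 + w2^2)); auto.
      replace (w1^2/(w1^2+w2^2) * (w1^2+w2^2)) with (w1^2) by (field; lra).
      assert (0 < w2^2) by (assert (w2*w2 > 0) by (destruct (Rle_dec 0 w2); [assert (0<w2) by lra; nra| nra]); nra). lra. } nra. }
  set (phi := acos q).
  destruct (acos_bound_lt q Hq) as [Hp1 Hp2].
  assert (Hcp : cos phi = q) by (apply cos_acos; lra).
  assert (Hsp : sin phi = Rabs w2 / r).
  { unfold phi. rewrite sin_acos by lra.
    replace (1 - q²) with ((Rabs w2 / r)²).
    - apply sqrt_Rsqr. apply Rmult_le_pos. apply Rabs_pos. left; apply Rinv_0_lt_compat; auto.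
    - unfold Rsqr. replace (q*q) with (w1^2 / (w1^2 + w2^2)) by (rewrite <- Hq2; ring).
      replace (Rabs w2 / r * (Rabs w2 / r)) with ((Rabs w2)^2 / (r*r)) by (field; lra).
      rewrite pow2_abs, Hrr. field. lra. }
  assert (Habs : eps * Rabs w2 = w2).
  { destruct (Rle_dec 0 w2). rewrite Rabs_pos_eq; auto. assert (eps > 0) by nra. nra.
    rewrite Rabs_left by lra. assert (eps < 0) by nra. nra. }
  set (th := c + phi).
  assert (Hcth : cos th = w1 / r).
  { unfold th. rewrite cos_plus, Hsc, Hcp. fold eps. unfold q.
    replace (eps * (eps * w1 / r) - 0 * sin phi) with ((eps*eps) * w1 / r) by (field; lra).
    rewrite He2. field; lra. }
  assert (Hsth : sin th = w2 / r).
  { unfold th. rewrite sin_plus, Hsc, Hsp. fold eps.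
    rewrite <- Habs at 2. field. lra. }
  exists (ln r, th). cbn [fst snd]. split; [|split].
  - rewrite exp_ln by auto. rewrite Hcth, Hsth. f_equal; field; lra.
  - reflexivity.
  - unfold SameStrip. split; [|split].
    + rewrite Hsth, Hspy.
      replace (eps * sin (py - c) * (w2 / r)) with ((w2 * eps) * sin (py - c) / r) by (field; lra).
      apply Rmult_lt_0_compat. nra. apply Rinv_0_lt_compat; auto.
    + unfold th, phi. apply Rabs_def1; lra.
    + unfold th, phi. destruct (Z_le_gt_dec 0 k) as [Hk|Hk].
      * assert (0 <= IZR k) by (apply IZR_le; auto). assert (0 <= c) by (unfold c; nra). nra.
      * assert (IZR k <= -1) by (apply IZR_le; lia). assert (c + PI <= 0) by (unfold c; nra). nra.
Qed.


Definition Wset (U : Cplx -> Prop) (w : Cplx) : Prop := exists z m, U z /\ iterate Cexp m z = w.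
Definition Good (U : Cplx -> Prop) (p : Cplx) (T : R) : Prop :=
  forall w, 0 < snd w * snd p -> cd2 w p < T * (snd w * snd p) -> Wset U w.
Definition NoReal (U : Cplx -> Prop) : Prop := forall z m, U z -> snd (iterate Cexp m z) <> 0.

Lemma iterate_S m z : iterate Cexp (S m) z = Cexp (iterate Cexp m z).
Proof. reflexivity. Qed.

Lemma Wset_E U w : Wset U w -> Wset U (Cexp w).
Proof. intros [z [m [Hz Hm]]]. exists z, (S m). split; auto. rewrite iterate_S, Hm; auto. Qed.

Lemma Good_mono U p T T' : Good U p T -> T' <= T -> Good U p T'.
Proof. intros G HT w H1 H2. apply G; auto. nra. Qed.

Lemma Pull1 U p T k : Good U p T -> sin (snd p) <> 0 -> KOK k (snd p) -> 0 < T -> Good U (Cexp p) (T/k).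
Proof. intros G Hs Hk HT w H1 H2.
  assert (Hk4 := KOK_pos k (snd p) Hk).
  destruct (LogStrip p w Hs H1) as [z [Hz [_ HS]]].
  assert (Q := Qineq p z k HS Hk). rewrite Hz in Q.
  destruct HS as [_ [_ Hp]].
  assert (Hd : cd2 z p < T * (snd z * snd p)).
  { set (P1 := snd w * snd (Cexp p)) in *. set (P2 := snd z * snd p) in *.
    assert (0 < P2) by (unfold P2; nra).
    assert (Hlt : k * cd2 w (Cexp p) * P2 < k * (T/k * P1) * P2).
    { apply Rmult_lt_compat_r; auto. apply Rmult_lt_compat_l; lra. }
    replace (k * (T/k*P1) * P2) with ((T*P2) * P1) in Hlt by (field; lra).
    apply (Rmult_lt_reg_r P1); auto. lra. }
  replace w with (Cexp z) by auto. apply Wset_E. apply G; auto. nra.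
Qed.

Lemma NoReal_sin U w : NoReal U -> Wset U w -> sin (snd w) <> 0.
Proof. intros H [z [m [Hz Hm]]] Hs. apply (H z (S m) Hz). rewrite iterate_S, Hm.
  unfold Cexp; simpl. rewrite Hs; ring. Qed.

Lemma sin_abs_lb y : Rabs y <= PI -> Rabs y - (Rabs y)^3/6 <= Rabs (sin y).
Proof. intros H. rewrite abs_sin_abs. pose proof (Rabs_pos y). pose proof PI_bnds.
  destruct (sin_poly (Rabs y) H0 H) as [A _].
  assert (0 <= sin (Rabs y)) by (apply sin_ge_0; lra). rewrite (Rabs_pos_eq (sin (Rabs y))); lra. Qed.

Lemma cos_lb2 y : 1 - y^2/2 <= cos y.
Proof. assert (Hc := cos_2a_sin (y/2)). replace (2*(y/2)) with y in Hc by field.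
  assert (Hs := sin_abs_le (y/2)).
  assert (sin (y/2) * sin (y/2) <= (y/2)^2).
  { rewrite <- (pow2_abs (y/2)). assert (0 <= Rabs (sin (y/2))) by apply Rabs_pos.
    replace (sin (y/2) * sin (y/2)) with (Rabs (sin (y/2)) ^2) by (rewrite pow2_abs; ring). apply pow_incr; lra. }
  lra.
Qed.

Lemma exp_step x : 7/8 * exp x >= x + 3/4.
Proof. destruct (Rle_dec x 1).
  - pose proof (exp_ineq1_le x). lra.
  - replace x with (1 + (x - 1)) at 1 by ring. rewrite exp_plus.
    pose proof (exp_ineq1_le 1). pose proof (exp_ineq1_le (x-1)).
    assert (exp 1 * exp (x-1) >= 2 * x) by nra. lra.
Qed.

Section Orbit.
Variable U : Cplx -> Prop.
Variable z0 : Cplx.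
Hypothesis HU : U z0.
Hypothesis HN : NoReal U.

Definition zn n := iterate Cexp n z0.

Lemma zn_W n : Wset U (zn n).
Proof. exists z0, n; auto. Qed.

Lemma zn_S n : zn (S n) = Cexp (zn n). Proof. reflexivity. Qed.

Lemma zn_sin n : sin (snd (zn n)) <> 0.
Proof. apply (NoReal_sin U); auto. apply zn_W. Qed.

Lemma zn_y n : snd (zn n) <> 0.
Proof. intro H. apply (zn_sin n). rewrite H, sin_0. auto. Qed.

Lemma dyn N : exists n, (N <= n)%nat /\ 1/2 <= Rabs (snd (zn n)).
Proof. apply NNPP. intro Hc.
  assert (Hs : forall n, (N <= n)%nat -> Rabs (snd (zn n)) < 1/2).
  { intros n Hn. destruct (Rlt_dec (Rabs (snd (zn n))) (1/2)); auto. exfalso. apply Hc. exists n. split; auto. lra. }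
  pose proof PI_bnds.
  assert (Hx : forall n, (N <= n)%nat -> fst (zn (S n)) >= fst (zn n) + 3/4).
  { intros n Hn. rewrite zn_S. unfold Cexp. cbn [fst snd].
    assert (H1 := Hs n Hn). set (y := snd (zn n)) in *. set (x := fst (zn n)).
    assert (cos y >= 7/8). { pose proof (cos_lb2 y). assert (y^2 <= 1/4).
      { rewrite <- pow2_abs. pose proof (Rabs_pos y). nra. } lra. }
    pose proof (exp_pos x). pose proof (exp_step x). nra. }
  assert (HB : forall j, fst (zn (N + j)) >= fst (zn N) + 3/4 * INR j).
  { induction j. rewrite Nat.add_0_r; simpl; lra.
    rewrite Nat.add_succ_r, S_INR. assert (E := Hx (N + j)%nat ltac:(lia)). lra. }
  destruct (nat_gt (4/3 * (1 - fst (zn N)))) as [j0 Hj0].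
  set (n1 := (N + j0)%nat).
  assert (Hx1 : forall j, fst (zn (n1 + j)) >= 1).
  { intros j. unfold n1. rewrite <- Nat.add_assoc. assert (E := HB (j0 + j)%nat).
    rewrite plus_INR in E. pose proof (pos_INR j). lra. }
  assert (Hy : forall j, Rabs (snd (zn (S (n1 + j)))) >= 3/2 * Rabs (snd (zn (n1 + j)))).
  { intros j. rewrite zn_S. unfold Cexp. cbn [fst snd].
    assert (H1 := Hs (n1 + j)%nat ltac:(unfold n1; lia)). assert (H2 := Hx1 j).
    set (y := snd (zn (n1 + j))) in *. set (x := fst (zn (n1 + j))) in *.
    assert (Hsl := sin_abs_lb y ltac:(lra)).
    assert (Rabs y ^3 <= Rabs y / 4) by (pose proof (Rabs_pos y); nra).
    pose proof (exp_ineq1_le x). pose proof (exp_pos x).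
    rewrite Rabs_mult, (Rabs_pos_eq (exp x)) by lra.
    pose proof (Rabs_pos y). pose proof (Rabs_pos (sin y)). nra. }
  assert (HD : forall j, Rabs (snd (zn (n1 + j))) >= (1 + INR j / 2) * Rabs (snd (zn n1))).
  { induction j. rewrite Nat.add_0_r; simpl; lra.
    rewrite Nat.add_succ_r, S_INR. assert (E := Hy j). pose proof (Rabs_pos (snd (zn n1))).
    pose proof (pos_INR j). nra. }
  assert (Hy1 : 0 < Rabs (snd (zn n1))) by (apply Rabs_pos_lt; apply zn_y).
  destruct (nat_gt (1 / Rabs (snd (zn n1)))) as [j Hj].
  assert (E := HD j). assert (E2 := Hs (n1 + j)%nat ltac:(unfold n1; lia)).
  assert (INR j * Rabs (snd (zn n1)) > 1).
  { apply (Rmult_lt_reg_r (/ Rabs (snd (zn n1)))). apply Rinv_0_lt_compat; auto.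
    replace (INR j * Rabs (snd (zn n1)) * / Rabs (snd (zn n1))) with (INR j) by (field; lra).
    replace (1 * / Rabs (snd (zn n1))) with (1 / Rabs (snd (zn n1))) by (field; lra). lra. }
  nra.
Qed.

Lemma Good_step n T : 0 < T -> Good U (zn n) T -> Good U (zn (S n)) T.
Proof. intros HT G. rewrite zn_S. replace T with (T/1) by field.
  apply Pull1; auto. apply zn_sin. left; auto. Qed.

Lemma Good_stepk n T : 0 < T -> 1/2 <= Rabs (snd (zn n)) -> Good U (zn n) T -> Good U (zn (S n)) (T/k0).
Proof. intros HT Hy G. rewrite zn_S. apply Pull1; auto. apply zn_sin. right; auto. Qed.

Lemma Good_plus n d T : 0 < T -> Good U (zn n) T -> Good U (zn (n + d)) T.
Proof. intros HT G. induction d. rewrite Nat.add_0_r; auto.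
  rewrite Nat.add_succ_r. apply Good_step; auto. Qed.

Lemma Good_grow T0 : 0 < T0 -> Good U (zn 0) T0 -> forall j, exists n, Good U (zn n) (T0 / k0^j).
Proof. intros HT G j. induction j.
  - exists 0%nat. simpl. replace (T0/1) with T0 by field. auto.
  - destruct IHj as [n Gn]. assert (Hkj : 0 < k0^j) by (apply pow_lt; unfold k0; lra).
    assert (HTj : 0 < T0 / k0^j) by (apply Rdiv_lt_0_compat; auto).
    destruct (dyn n) as [n' [Hn' Hy]].
    replace n' with (n + (n' - n))%nat in Hy by lia.
    assert (G' := Good_plus n (n' - n) _ HTj Gn).
    exists (S (n + (n' - n))). assert (k0 <> 0) by (unfold k0; lra).
    replace (T0 / k0 ^ S j) with (T0 / k0^j / k0) by (simpl; field; split; lra).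
    apply Good_stepk; auto.
Qed.

End Orbit.


Lemma linept_pos y : 1/2 <= y -> exists c, sin c = 0 /\ 0 < c * y /\ (c - y)^2 < (2*PI+1) * (c*y).
Proof. intros Hy. pose proof PI_bnds. destruct (Rlt_dec y PI).
  - exists PI. split; [apply sin_PI|]. split. nra.
    assert ((PI - y)^2 < PI^2) by nra. nra.
  - set (k := Zfloor (y / PI)). destruct (Zfloor_bound (y/PI)) as [B1 B2]. fold k in B1, B2.
    exists (IZR k * PI). split. apply sin_eq_0_1; exists k; auto.
    assert (Hc1 : IZR k * PI <= y). { apply (Rmult_le_reg_r (/PI)). apply Rinv_0_lt_compat; lra.
      replace (IZR k * PI * / PI) with (IZR k) by (field; lra). exact B1. }
    assert (Hc2 : y < IZR k * PI + PI). { apply (Rmult_lt_reg_r (/PI)). apply Rinv_0_lt_compat; lra.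
      replace ((IZR k * PI + PI) * / PI) with (IZR k + 1) by (field; lra). exact B2. }
    assert (Hk : (1 <= k)%Z). { apply Zfloor_lub. apply (Rmult_le_reg_r PI). lra.
      replace (y / PI * PI) with y by (field; lra). lra. }
    assert (1 <= IZR k) by (apply IZR_le in Hk; auto).
    split. nra.
    assert ((IZR k * PI - y)^2 < PI^2) by nra. nra.
Qed.

Lemma linept y : 1/2 <= Rabs y -> exists c, sin c = 0 /\ 0 < c * y /\ (c - y)^2 < (2*PI+1) * (c*y).
Proof. intros Hy. destruct (Rle_dec 0 y).
  - rewrite Rabs_pos_eq in Hy; auto. apply linept_pos; auto.
  - rewrite Rabs_left in Hy by lra. destruct (linept_pos (-y) Hy) as [c [A [B C]]].
    exists (-c). rewrite sin_neg, A. split; [ring|]. split; nra.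
Qed.

Lemma no_noreal U : C_open U -> (exists z, U z) -> ~ NoReal U.
Proof. intros HO [z0 Hz0] HN.
  destruct (HO z0 Hz0) as [r [Hr Hball]].
  assert (Hy0 : snd z0 <> 0) by (apply (HN z0 0%nat Hz0)).
  assert (Ha : 0 < Rabs (snd z0)) by (apply Rabs_pos_lt; auto).
  remember (r^2 / (Rabs (snd z0) * (Rabs (snd z0) + r))) as T0 eqn:HT0def.
  assert (HT0 : 0 < T0) by (rewrite HT0def; apply Rdiv_lt_0_compat; nra).
  assert (G0 : Good U (zn z0 0) T0).
  { intros w H1 H2. exists w, 0%nat. split; [|reflexivity]. apply Hball.
    change (zn z0 0) with z0 in *.
    unfold cd2 in H2. unfold Cdist. unfold Rsqr.
    destruct w as [w1 w2]. destruct z0 as [x0 yy]. cbn [fst snd] in *.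
    assert (HD0 : 0 <= (w1 - x0) * (w1 - x0) + (w2 - yy) * (w2 - yy)).
    { pose proof (Rle_0_sqr (w1 - x0)). pose proof (Rle_0_sqr (w2 - yy)). unfold Rsqr in *. lra. }
    set (D := (w1 - x0) * (w1 - x0) + (w2 - yy) * (w2 - yy)) in *.
    set (d := sqrt D). assert (Hd0 : 0 <= d) by apply sqrt_pos.
    assert (Hdd : d * d = D) by (apply sqrt_sqrt; auto).
    replace ((w1 - x0)^2 + (w2 - yy)^2) with D in H2 by (unfold D; ring).
    assert (H3 : (w2 - yy)^2 <= d*d).
    { rewrite Hdd. unfold D. pose proof (Rle_0_sqr (w1 - x0)). unfold Rsqr in *. nra. }
    assert (H4 : Rabs (w2 - yy) <= d).
    { destruct (Rle_dec (Rabs (w2 - yy)) d); auto. rewrite <- pow2_abs in H3. nra. }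
    assert (H5 : w2 * yy <= Rabs yy * (Rabs yy + d)).
    { assert (w2 * yy = Rabs w2 * Rabs yy) by (rewrite <- Rabs_mult; rewrite Rabs_pos_eq; lra).
      assert (Rabs w2 <= Rabs yy + d).
      { replace w2 with (yy + (w2 - yy)) by ring. pose proof (Rabs_triang yy (w2 - yy)). lra. }
      pose proof (Rabs_pos w2). nra. }
    assert (H6 : d*d < T0 * (Rabs yy * (Rabs yy + d))).
    { rewrite Hdd. assert (T0 * (w2 * yy) <= T0 * (Rabs yy * (Rabs yy + d))) by (apply Rmult_le_compat_l; lra). lra. }
    assert (H7 : d*d*(Rabs yy + r) < r^2 * (Rabs yy + d)).
    { rewrite HT0def in H6. replace (r ^ 2 / (Rabs yy * (Rabs yy + r)) * (Rabs yy * (Rabs yy + d)))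
        with (r^2 * (Rabs yy + d) / (Rabs yy + r)) in H6 by (field; lra).
      apply (Rmult_lt_reg_r (/ (Rabs yy + r))). apply Rinv_0_lt_compat; lra.
      replace (d * d * (Rabs yy + r) * / (Rabs yy + r)) with (d*d) by (field; lra). lra. }
    destruct (Rlt_dec d r) as [Hdr|Hdr]; auto. exfalso. assert (Hrd : r <= d) by lra.
    assert (d*d >= r*r) by nra. assert (d*d*Rabs yy >= r*r*Rabs yy) by nra.
    assert (d*d*r >= r*r*d) by (assert (d*r*(d-r) >= 0) by (apply Rle_ge; apply Rmult_le_pos; nra); nra).
    nra. }
  assert (Hgrow := Good_grow U z0 Hz0 HN T0 HT0 G0).
  pose proof PI_bnds.
  set (Bd := 2*PI + 1).
  destruct (nat_gt (99 * Bd / T0)) as [j Hj].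
  destruct (Hgrow j) as [n Gn].
  assert (Hk0 : k0 <> 0) by (unfold k0; lra).
  assert (HBj : Bd <= T0 / k0^j).
  { unfold Rdiv. rewrite <- pow_inv. replace (/ k0) with (1 + 1/99) by (unfold k0; field).
    assert (P := poly j (1/99) ltac:(lra)).
    assert (Bd <= T0 * (1 + INR j * (1/99))).
    { apply (Rmult_le_reg_r (/T0)). apply Rinv_0_lt_compat; auto.
      replace (T0 * (1 + INR j * (1/99)) * / T0) with (1 + INR j / 99) by (field; lra).
      assert (99 * Bd / T0 < INR j) by auto. 
      replace (99 * Bd / T0) with (99 * (Bd * / T0)) in H0 by (field; lra).
      assert (0 <= Bd * / T0). { apply Rmult_le_pos. unfold Bd; lra. left; apply Rinv_0_lt_compat; auto. }
      lra. }
    assert (T0 * (1 + INR j * (1/99)) <= T0 * (1 + 1/99)^j) by (apply Rmult_le_compat_l; lra).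
    lra. }
  assert (Gn' := Good_mono _ _ _ _ Gn HBj).
  destruct (dyn U z0 Hz0 HN n) as [n' [Hn' Hy']].
  replace n' with (n + (n' - n))%nat in Hy' by lia.
  assert (HBd : 0 < Bd) by (unfold Bd; lra).
  assert (G2 := Good_plus U z0 Hz0 HN n (n' - n) Bd HBd Gn').
  set (p := zn z0 (n + (n' - n))) in *.
  destruct (linept (snd p) Hy') as [c [Hc1 [Hc2 Hc3]]].
  destruct (G2 (fst p, c)) as [z [m [Hz Hm]]].
  - simpl. nra.
  - unfold cd2. simpl. replace (fst p - fst p) with 0 by ring. unfold Bd. nra.
  - apply (HN z (S m) Hz). rewrite iterate_S, Hm. unfold Cexp. simpl. rewrite Hc1. ring.
Qed.


Lemma ln_le' x y : 0 < x -> x <= y -> ln x <= ln y.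
Proof. intros H1 [H2|H2]. left; apply ln_increasing; auto. subst; lra. Qed.

Lemma EucPull (a w : Cplx) : 4 * cd2 w (Cexp a) <= exp (2 * fst a) ->
  exists z, Cexp z = w /\ cd2 z a * exp (2 * fst a) <= 9 * cd2 w (Cexp a).
Proof. destruct a as [x y]; destruct w as [w1 w2]. unfold cd2, Cexp. cbn [fst snd]. intros H.
  set (E := exp x) in *. assert (HE : 0 < E) by apply exp_pos.
  assert (HE2 : exp (2*x) = E*E) by (unfold E; replace (2*x) with (x+x) by ring; apply exp_plus).
  rewrite HE2 in *.
  assert (Hsc := sin2_cos2 y). unfold Rsqr in Hsc.
  set (u1 := (w1 * cos y + w2 * sin y) / E). set (u2 := (w2 * cos y - w1 * sin y) / E).
  set (c2 := (w1 - E * cos y)^2 + (w2 - E * sin y)^2) in *.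
  assert (Heps : (u1 - 1)^2 + u2^2 = c2 / (E*E)).
  { assert (N : (w1 * cos y + w2 * sin y - E)^2 + (w2 * cos y - w1 * sin y)^2 = c2).
    { unfold c2.
      assert (Hd : (w1 * cos y + w2 * sin y - E)^2 + (w2 * cos y - w1 * sin y)^2
                   - ((w1 - E * cos y)^2 + (w2 - E * sin y)^2)
                   = (w1^2+w2^2-E^2)*(sin y*sin y + cos y*cos y - 1)) by ring.
      rewrite Hsc in Hd. replace (1-1) with 0 in Hd by ring. rewrite Rmult_0_r in Hd. lra. }
    unfold u1, u2. rewrite <- N. field. lra. }
  assert (Hc0 : 0 <= c2) by (unfold c2; pose proof (pow2_ge_0 (w1 - E * cos y)); pose proof (pow2_ge_0 (w2 - E * sin y)); lra).
  set (e2 := (u1 - 1)^2 + u2^2).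
  assert (He2 : e2 <= 1/4).
  { unfold e2. rewrite Heps. apply (Rmult_le_reg_r (E*E)). nra.
    replace (c2 / (E*E) * (E*E)) with c2 by (field; lra). lra. }
  assert (Hu1 : 1/2 <= u1) by (unfold e2 in He2; nra).
  assert (Hu2 : u2^2 <= e2) by (unfold e2; pose proof (pow2_ge_0 (u1-1)); lra).
  set (r := sqrt (u1^2 + u2^2)).
  assert (Hrr : r * r = u1^2 + u2^2) by (apply sqrt_sqrt; nra).
  assert (Hr0 : 0 <= r) by apply sqrt_pos.
  assert (Hru : u1 <= r) by nra.
  assert (Hr1 : (r - 1)^2 <= e2) by (unfold e2; nra).
  assert (Hrpos : 0 < r) by lra.
  set (phi := atan (u2 / u1)).
  assert (Hsq : sqrt (1 + (u2/u1)²) = r / u1).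
  { rewrite <- (sqrt_Rsqr (r/u1)).
    - f_equal. unfold Rsqr. replace (r/u1*(r/u1)) with ((r*r)/(u1*u1)) by (field; lra). rewrite Hrr. field. lra.
    - apply Rmult_le_pos; auto. left; apply Rinv_0_lt_compat; lra. }
  assert (Hcp : cos phi = u1 / r) by (unfold phi; rewrite cos_atan, Hsq; field; lra).
  assert (Hsp : sin phi = u2 / r) by (unfold phi; rewrite sin_atan, Hsq; field; lra).
  exists (x + ln r, y + phi). cbn [fst snd]. split.
  - rewrite exp_plus, exp_ln by auto. fold E. rewrite cos_plus, sin_plus, Hcp, Hsp.
    assert (HEu1 : E*u1 = w1 * cos y + w2 * sin y) by (unfold u1; field; lra).
    assert (HEu2 : E*u2 = w2 * cos y - w1 * sin y) by (unfold u2; field; lra).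
    f_equal.
    + replace (E * r * (cos y * (u1 / r) - sin y * (u2 / r))) with (cos y * (E*u1) - sin y * (E*u2)) by (field; lra).
      rewrite HEu1, HEu2. transitivity (w1 * (sin y*sin y + cos y*cos y)). ring. rewrite Hsc; ring.
    + replace (E * r * (sin y * (u1 / r) + cos y * (u2 / r))) with (sin y * (E*u1) + cos y * (E*u2)) by (field; lra).
      rewrite HEu1, HEu2. transitivity (w2 * (sin y*sin y + cos y*cos y)). ring. rewrite Hsc; ring.
  - replace (x + ln r - x) with (ln r) by ring. replace (y + phi - y) with phi by ring.
    assert (Hphi : phi^2 <= 4 * u2^2).
    { assert (A := atan_abs (u2/u1)). fold phi in A.
      assert (Rabs (u2/u1) <= 2 * Rabs u2).
      { unfold Rdiv. rewrite Rabs_mult. rewrite (Rabs_pos_eq (/u1)) by (left; apply Rinv_0_lt_compat; lra).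
        assert (/u1 <= 2). { replace 2 with (/ (1/2)) by field. apply Rinv_le_contravar; lra. }
        pose proof (Rabs_pos u2). assert (0 < /u1) by (apply Rinv_0_lt_compat; lra). nra. }
      rewrite <- (pow2_abs phi), <- (pow2_abs u2). pose proof (Rabs_pos phi). nra. }
    assert (Hln : (ln r)^2 <= 4 * (r-1)^2).
    { pose proof (ln_le_sub1 r Hrpos) as L1. pose proof (ln_ge_1inv r Hrpos) as L2.
      destruct (Rle_dec 1 r).
      + assert (0 <= ln r) by (rewrite <- ln_1; apply ln_le'; lra). nra.
      + assert (Hir : /r * r = 1) by (field; lra).
        assert (1 - /r >= 2*(r-1)).
        { assert ((1 - /r - 2*(r-1)) * r = -(2*r-1)*(r-1)).
          { replace ((1 - /r - 2*(r-1)) * r) with (r - /r*r - 2*r*r + 2*r) by ring. rewrite Hir. ring. }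
          assert (-(2*r-1)*(r-1) >= 0) by nra.
          destruct (Rlt_dec (1 - /r - 2*(r-1)) 0); [|lra]. nra. }
        assert (ln r <= 0) by lra. nra. }
    assert (Hfin : (ln r)^2 + phi^2 <= 9 * e2) by (pose proof (pow2_ge_0 u2); lra).
    unfold e2 in Hfin. rewrite Heps in Hfin.
    apply (Rmult_le_compat_r (E*E)) in Hfin; [|nra].
    replace (9 * (c2 / (E*E)) * (E*E)) with (9*c2) in Hfin by (field; lra). exact Hfin.
Qed.


Lemma exp2x x : exp (2*x) = exp x ^ 2.
Proof. replace (2*x) with (x+x) by ring. rewrite exp_plus. ring. Qed.

Lemma LocalOpen N : forall z rho, 0 < rho -> exists delta, 0 < delta /\
  forall w, cd2 w (iterate Cexp N z) < delta -> exists zeta, cd2 zeta z < rho /\ iterate Cexp N zeta = w.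
Proof. induction N; intros z rho Hr.
  - exists rho. split; auto. intros w Hw. exists w. split; auto.
  - destruct (IHN z rho Hr) as [d [Hd H]].
    set (p := iterate Cexp N z).
    set (ex := exp (2 * fst p)). assert (Hex : 0 < ex) by apply exp_pos.
    exists (Rmin (ex/4) (d * ex / 9)). split.
    { apply Rmin_pos; apply Rdiv_lt_0_compat; nra. }
    intros w Hw. rewrite iterate_S in Hw. fold p in Hw.
    assert (H1 : 4 * cd2 w (Cexp p) <= ex). { pose proof (Rmin_l (ex/4) (d*ex/9)). lra. }
    destruct (EucPull p w H1) as [z' [Hz' Hb]]. fold ex in Hb.
    assert (cd2 z' p < d).
    { pose proof (Rmin_r (ex/4) (d*ex/9)). apply (Rmult_lt_reg_r ex); auto. lra. }
    destruct (H z' H0) as [zeta [Hze Hit]]. exists zeta. split; auto.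
    rewrite iterate_S, Hit. auto.
Qed.

Definition rit (m : nat) (x : R) : R := Nat.iter m exp x.

Lemma iterate_real m x : iterate Cexp m (x, 0) = (rit m x, 0).
Proof. induction m. reflexivity. rewrite iterate_S, IHm. unfold Cexp, rit. simpl.
  rewrite cos_0, sin_0. f_equal; ring. Qed.

Lemma rit_S m x : rit (S m) x = rit m (exp x).
Proof. unfold rit. apply Nat.iter_succ_r. Qed.

Lemma rit_ge m x : rit m x >= x + INR m.
Proof. induction m. simpl; lra. unfold rit in *. simpl Nat.iter. rewrite S_INR.
  pose proof (exp_ineq1_le (Nat.iter m exp x)). lra. Qed.

Lemma Cexp_real x : Cexp (x, 0) = (exp x, 0).
Proof. unfold Cexp; simpl. rewrite cos_0, sin_0. f_equal; ring. Qed.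

Lemma Growth m : forall x, 6 <= x -> forall w, 4 * cd2 w (rit (S m) x, 0) <= (rit (S m) x)^2 ->
  exists zeta, iterate Cexp (S m) zeta = w /\ cd2 zeta (x, 0) <= 9/4 / 4^m.
Proof. induction m; intros x Hx w Hw.
  - assert (H1 : 4 * cd2 w (Cexp (x,0)) <= exp (2 * fst (x,0))).
    { rewrite Cexp_real. simpl fst. rewrite exp2x. exact Hw. }
    destruct (EucPull (x,0) w H1) as [z [Hz Hb]]. exists z. split; [exact Hz|].
    simpl fst in Hb. rewrite exp2x in Hb. rewrite Cexp_real in Hb. change (rit 1 x) with (exp x) in Hw.
    assert (0 < exp x) by apply exp_pos.
    assert (cd2 z (x,0) * exp x ^ 2 <= 9/4 * exp x ^2) by lra.
    replace (9/4/4^0) with (9/4) by (simpl; field).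
    apply (Rmult_le_reg_r (exp x ^2)). apply pow_lt; auto. lra.
  - rewrite (rit_S (S m)) in Hw.
    assert (Hex : 6 <= exp x) by (pose proof (exp_ineq1_le x); lra).
    destruct (IHm (exp x) Hex w Hw) as [z' [Hz' Hb']].
    assert (H4 : 0 < 4^m) by (apply pow_lt; lra).
    assert (Hb'' : cd2 z' (exp x, 0) <= 9/4).
    { assert (9/4/4^m <= 9/4). { apply (Rmult_le_reg_r (4^m)); auto. field_simplify; [|lra].
        assert (1 <= 4^m) by (apply pow_R1_Rle; lra). lra. } lra. }
    assert (Hx7 : 7 <= exp x) by (pose proof (exp_ineq1_le x); lra).
    assert (Hee : 49 <= exp x ^ 2) by nra.
    assert (H1 : 4 * cd2 z' (Cexp (x,0)) <= exp (2 * fst (x,0))).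
    { rewrite Cexp_real. simpl fst. rewrite exp2x. lra. }
    destruct (EucPull (x,0) z' H1) as [z [Hz Hb]]. exists z. split.
    + change (iterate Cexp (S (S m)) z) with (Nat.iter (S (S m)) Cexp z).
      rewrite Nat.iter_succ_r. change (Nat.iter (S m) Cexp (Cexp z) = w). rewrite Hz. exact Hz'.
    + simpl fst in Hb. rewrite exp2x, Cexp_real in Hb.
      assert (cd2 z (x,0) * exp x ^2 <= 9 * (9/4/4^m)) by lra.
      replace (9/4/4^S m) with (9/4/4^m/4) by (simpl; field; lra).
      assert (0 <= cd2 z (x,0)) by (unfold cd2; pose proof (pow2_ge_0 (fst z - fst (x,0))); pose proof (pow2_ge_0 (snd z - snd (x,0))); lra).
      assert (cd2 z (x,0) * 36 <= cd2 z (x,0) * exp x^2) by (apply Rmult_le_compat_l; lra).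
      assert (0 < 9/4/4^m) by (apply Rdiv_lt_0_compat; lra).
      lra.
Qed.


Lemma cd2_Cdist w z r : 0 < r -> cd2 w z < r^2 -> Cdist w z < r.
Proof. intros Hr H. unfold Cdist, cd2 in *. rewrite !Rsqr_pow2.
  rewrite <- (sqrt_pow2 r) by lra. apply sqrt_lt_1_alt. split; auto.
  pose proof (pow2_ge_0 (fst w - fst z)). pose proof (pow2_ge_0 (snd w - snd z)). lra. Qed.

Lemma BigDisk U z0 N : C_open U -> U z0 -> snd (iterate Cexp N z0) = 0 ->
  forall A, exists n X, A <= X /\ forall w, 4 * cd2 w (X, 0) <= X^2 -> exists zeta, U zeta /\ iterate Cexp n zeta = w.
Proof. intros HO Hz HN A.
  destruct (HO z0 Hz) as [r [Hr Hball]].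
  set (p := fst (iterate Cexp N z0)).
  assert (Hp : iterate Cexp N z0 = (p, 0)) by (rewrite <- HN; unfold p; destruct (iterate Cexp N z0); reflexivity).
  set (x := rit 7 p).
  assert (Hx : 6 <= x).
  { unfold x. change (rit 7 p) with (rit 6 (exp p)) .
    pose proof (rit_ge 6 (exp p)). pose proof (exp_pos p). simpl INR in H. lra. }
  assert (Hit : iterate Cexp (7 + N) z0 = (x, 0)).
  { unfold iterate. rewrite Nat.iter_add. fold (iterate Cexp N z0). rewrite Hp.
    exact (iterate_real 7 p). }
  destruct (LocalOpen (7 + N) z0 (r^2) ltac:(nra)) as [d [Hd HL]].
  rewrite Hit in HL.
  destruct (nat_gt (Rmax A (9 / (4 * d)))) as [m Hm].
  assert (HmA : A < INR m) by (pose proof (Rmax_l A (9/(4*d))); lra).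
  assert (Hmd : 9/(4*d) < INR m) by (pose proof (Rmax_r A (9/(4*d))); lra).
  exists (S m + (7 + N))%nat, (rit (S m) x). split.
  { pose proof (rit_ge (S m) x). rewrite S_INR in H. lra. }
  intros w Hw.
  destruct (Growth m x Hx w Hw) as [z' [Hz' Hb]].
  assert (H4 : 1 + INR m * 3 <= 4^m) by (replace 4 with (1+3) by ring; apply poly; lra).
  assert (Hdd : 9/4/4^m < d).
  { assert (0 < 4^m) by (apply pow_lt; lra).
    apply (Rmult_lt_reg_r (4^m)); auto. replace (9/4/4^m * 4^m) with (9/4) by (field; lra).
    assert (9/4 < d * INR m).
    { apply (Rmult_lt_reg_r (/d)). apply Rinv_0_lt_compat; auto.
      replace (d * INR m * /d) with (INR m) by (field; lra).
      replace (9/4 * /d) with (9/(4*d)) by (field; lra). exact Hmd. }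
    pose proof (pos_INR m). nra. }
  destruct (HL z' ltac:(lra)) as [zeta [Hze Hzit]].
  exists zeta. split.
  - apply Hball. apply cd2_Cdist; auto.
  - unfold iterate. rewrite Nat.iter_add. fold (iterate Cexp (7+N) zeta). rewrite Hzit. exact Hz'.
Qed.

Lemma sign_choice Y0 s : s <> 0 -> exists Y, Y0 <= Y <= Y0 + 2*PI /\ 0 < sin Y * s.
Proof. intros Hs. pose proof PI_bnds.
  assert (S1 : sin (Y0 + PI) = - sin Y0) by (rewrite sin_plus, sin_PI, cos_PI; ring).
  assert (S2 : sin (Y0 + PI/2) = cos Y0) by (rewrite sin_plus, sin_PI2, cos_PI2; ring).
  assert (S3 : sin (Y0 + PI/2 + PI) = - cos Y0) by (rewrite sin_plus, sin_PI, cos_PI, S2; ring).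
  destruct (Req_dec (sin Y0) 0) as [H0|H0].
  - assert (Hc : cos Y0 <> 0). { intro. pose proof (sin2_cos2 Y0). unfold Rsqr in H2. rewrite H0, H1 in H2. lra. }
    destruct (Rlt_dec 0 (cos Y0 * s)).
    + exists (Y0 + PI/2). split. lra. rewrite S2; auto.
    + exists (Y0 + PI/2 + PI). split. lra. rewrite S3.
      assert (cos Y0 * s <> 0) by (apply Rmult_integral_contrapositive; auto). nra.
  - destruct (Rlt_dec 0 (sin Y0 * s)).
    + exists Y0. split. lra. auto.
    + exists (Y0 + PI). split. lra. rewrite S1.
      assert (sin Y0 * s <> 0) by (apply Rmult_integral_contrapositive; auto). nra.
Qed.


Theorem mainTheorem8 :
  forall U V : Cplx -> Prop,
    C_open U -> (exists z, U z) ->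
    C_open V -> (exists z, V z) ->
    exists n : nat, exists z : Cplx, U z /\ V (iterate Cexp n z).
Proof.
  intros U V HU HUne HV [v0 Hv0].
  assert (Hreal : exists z m, U z /\ snd (iterate Cexp m z) = 0).
  { apply NNPP. intro Hc. apply (no_noreal U HU HUne). intros z m Hz Hs. apply Hc. eauto. }
  destruct Hreal as [z0 [N [Hz0 HN]]].
  assert (Hv : exists v, V v /\ snd v <> 0).
  { destruct (HV v0 Hv0) as [r [Hr Hb]]. destruct (Req_dec (snd v0) 0) as [E|E].
    - exists (fst v0, r/2). split.
      + apply Hb. apply cd2_Cdist; auto. unfold cd2. simpl. rewrite E. nra.
      + simpl. lra.
    - exists v0; auto. }
  destruct Hv as [[v1 v2] [HvV Hv2]]. simpl in Hv2.
  pose proof PI_bnds.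
  set (L := ln (sqrt (v1^2 + v2^2))).
  set (A := 4*PI + Rabs L + 20).
  destruct (BigDisk U z0 N HU Hz0 HN A) as [n [X [HXA Hdisk]]].
  set (Y0 := exp (X - 1) + PI).
  destruct (sign_choice Y0 v2 Hv2) as [Y [HY HYs]].
  assert (HsY : sin Y <> 0) by (intro E; rewrite E in HYs; lra).
  destruct (LogStrip (0, Y) (v1, v2) HsY) as [w1 [Hw1 [Hf1 HS1]]].
  { unfold Cexp; simpl. rewrite exp_0. nra. }
  cbn [fst snd] in Hf1. fold L in Hf1. destruct HS1 as [_ [HS1 _]]. cbn [fst snd] in HS1.
  set (th1 := snd w1) in *.
  apply Rabs_def2 in HS1.
  assert (Hex1 : X <= exp (X - 1)) by (pose proof (exp_ineq1_le (X-1)); lra).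
  assert (Hth1a : exp (X-1) < th1) by (unfold Y0 in HY; lra).
  assert (Hth1b : th1 < exp (X-1) + 4*PI) by (unfold Y0 in HY; lra).
  assert (Hsp : sin (snd (X, PI/2)) <> 0) by (simpl; rewrite sin_PI2; lra).
  destruct (LogStrip (X, PI/2) w1 Hsp) as [w [Hw [Hf HS]]].
  { unfold Cexp; simpl. rewrite sin_PI2. assert (0 < snd w1) by (unfold th1 in *; pose proof (exp_pos (X-1)); lra). pose proof (exp_pos X). nra. }
  destruct HS as [_ [HS _]]. cbn [fst snd] in HS. apply Rabs_def2 in HS.
  destruct w1 as [a1 b1]. unfold th1 in *. cbn [fst snd] in *. subst a1.
  set (rho := sqrt (L^2 + b1^2)) in *.
  assert (Hrho1 : b1 <= rho).
  { unfold rho. rewrite <- (sqrt_pow2 b1) at 1 by (pose proof (exp_pos (X-1)); lra). apply sqrt_le_1_alt. pose proof (pow2_ge_0 L). lra. }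
  assert (Hrho2 : rho <= Rabs L + b1).
  { unfold rho. rewrite <- (sqrt_pow2 (Rabs L + b1)) by (pose proof (Rabs_pos L); pose proof (exp_pos (X-1)); lra).
    apply sqrt_le_1_alt. rewrite <- (pow2_abs L). pose proof (Rabs_pos L). pose proof (exp_pos (X-1)). nra. }
  assert (Hexp1 : 0 < exp (X-1)) by apply exp_pos.
  assert (Hl1 : X - 1 <= fst w).
  { rewrite Hf. rewrite <- (ln_exp (X-1)) at 1. apply ln_le'; lra. }
  assert (Hl2 : fst w <= X + 1).
  { rewrite Hf. rewrite <- (ln_exp (X+1)). apply ln_le'. lra.
    replace (X+1) with ((X-1) + 2) by ring. rewrite exp_plus.
    pose proof (exp_ineq1_le 2). unfold A in HXA. nra. }
  assert (Hc : 4 * cd2 w (X, 0) <= X^2).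
  { unfold cd2. simpl. unfold A in HXA. pose proof (Rabs_pos L).
    assert ((fst w - X)^2 <= 1) by nra.
    assert ((snd w - 0)^2 <= 36) by nra.
    nra. }
  destruct (Hdisk w Hc) as [zeta [HzU Hzit]].
  exists (S (S n)), zeta. split; auto.
  rewrite !iterate_S, Hzit, Hw, Hw1. exact HvV.
Qed.
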